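(* Let $\mathbb{K}$ be an $\aleph_0$-complete field. Let $x=(x_1,\ldots,x_n)$, $Y=(Y_1,\ldots,Y_m)$, $f=(f_1,\ldots,f_r)\in\mathbb{K}[\![x]\!][Y]^r$ and $J_i\subset\{1,\ldots,n\}$ for $i=1,\ldots,m$. Then there exists a map $\nu:\mathbb{N}^m\to\mathbb{N}$ such that: if $c=(c_1,\ldots,c_m)\in\mathbb{N}^m$ and $y'=(y'_1,\ldots,y'_m)$ with $y'_i\in\mathbb{K}[\![x_{J_i}]\!]$ for $i=1,\ldots,m$ satisfies $f(y')\equiv 0$ modulo $(x)^{\nu(c)}$ and $\mathrm{ord}(y'_i)=c_i$ for $i=1,\ldots,m$, then there exist $y_i\in\mathbb{K}[\![x_{J_i}]\!]$, $i=1,\ldots,m$, such that $y=(y_1,\ldots,y_m)$ satisfies $f(y)=0$ and $\mathrm{ord}(y_i)=c_i$ for all $i=1,\ldots,m$.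
   Context: A field $\mathbb{K}$ is called $\aleph_0$-complete if every countable system $\mathcal S$ of polynomial equations with coefficients in $\mathbb{K}$ (in a countable number of indeterminates) has a solution in $\mathbb{K}$ if and only if every finite sub-system of $\mathcal S$ has a solution in $\mathbb{K}$. For $J\subset\{1,\ldots,n\}$, $\mathbb{K}[\![x_J]\!]$ denotes the subring of $\mathbb{K}[\![x]\!]$ of formal power series in the variables $x_j$, $j\in J$ only. $(x)$ is the maximal ideal of $\mathbb{K}[\![x]\!]$. For a power series $g$, $\mathrm{ord}(g)$ is the smallest total degree of a monomial appearing in $g$ with nonzero coefficient. *)

(* Defs.v *)
From mathcomp Require Import all_boot all_order all_algebra.
Set Implicit Arguments. Unset Strict Implicit. Unset Printing Implicit Defensive.
Import GRing.Theory.
Local Open Scope ring_scope.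

(* A polynomial with coefficients in K in the countably many indeterminates
   X_0, X_1, ... : a finite list of terms (coefficient, exponent list), where
   the exponent of X_j in the monomial [s] is [nth 0 s j]. *)
Definition kpoly (K : fieldType) := seq (K * seq nat).

Definition keval (K : fieldType) (p : kpoly K) (z : nat -> K) : K :=
  \sum_(t <- p) t.1 * \prod_(j < size t.2) z j ^+ nth 0%N t.2 j.

Definition aleph0_complete (K : fieldType) : Prop :=
  forall S : nat -> kpoly K,
    (exists z : nat -> K, forall i, keval (S i) z = 0) <->
    (forall F : seq nat, exists z : nat -> K, forall i, i \in F -> keval (S i) z = 0).

Definition mono (n : nat) := {ffun 'I_n -> nat}.
Definition mdeg n (b : mono n) : nat := (\sum_(i < n) b i)%N.

Definition ps (K : fieldType) (n : nat) := mono n -> K.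

Definition ps0 (K : fieldType) (n : nat) : ps K n := fun _ => 0.
Definition ps1 (K : fieldType) (n : nat) : ps K n := fun b => if b == [ffun => 0%N] then 1 else 0.
Definition ps_add K n (a c : ps K n) : ps K n := fun b => a b + c b.
(* Cauchy product: (a c)_beta = sum_{alpha <= beta} a_alpha c_{beta - alpha};
   alpha ranges over functions 'I_n -> 'I_(|beta|+1) with alpha <= beta. *)
Definition ps_mul K n (a c : ps K n) : ps K n := fun b =>
  \sum_(al : {ffun 'I_n -> 'I_(mdeg b).+1} | [forall i, (al i <= b i)%N])
     a [ffun i => nat_of_ord (al i)] * c [ffun i => (b i - al i)%N].
Definition ps_pow K n (a : ps K n) (k : nat) : ps K n := iter k (ps_mul a) (@ps1 K n).

Definition in_subring K n (J : {set 'I_n}) (g : ps K n) : Prop :=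
  forall b : mono n, (exists j, (j \notin J) && (b j != 0%N)) -> g b = 0.

Definition in_pow_max_ideal K n (g : ps K n) (N : nat) : Prop :=
  forall b : mono n, (mdeg b < N)%N -> g b = 0.

Definition ps_is0 K n (g : ps K n) : Prop := forall b, g b = 0.

Definition ps_ord_eq K n (g : ps K n) (c : nat) : Prop :=
  (exists b : mono n, mdeg b = c /\ g b != 0) /\
  (forall b : mono n, (mdeg b < c)%N -> g b = 0).

Definition pspoly K n m := seq (ps K n * mono m).

Definition pseval K n m (p : pspoly K n m) (y : 'I_m -> ps K n) : ps K n :=
  \big[@ps_add K n / @ps0 K n]_(t <- p)
     ps_mul t.1 (\big[@ps_mul K n / @ps1 K n]_(i < m) ps_pow (y i) (t.2 i)).

(* Main.v *)
Require Import Defs.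
From mathcomp Require Import all_boot all_order all_algebra.
From Stdlib Require Import FunctionalExtensionality ClassicalEpsilon Classical.
Set Implicit Arguments. Unset Strict Implicit. Unset Printing Implicit Defensive.
Import GRing.Theory.
Local Open Scope ring_scope.

Definition krepr (K : fieldType) (F : (nat -> K) -> K) :=
  exists p : kpoly K, forall z, keval p z = F z.

Lemma repr_ext (K : fieldType) (F G : (nat -> K) -> K) :
  (forall z, F z = G z) -> krepr F -> krepr G.
Proof. by move=> e [p hp]; exists p => z; rewrite hp e. Qed.

Lemma repr_cst (K : fieldType) (c : K) : krepr (fun _ => c).
Proof.
exists [:: (c, [::])] => z; rewrite /keval big_cons big_nil /= big_ord0.
by rewrite mulr1 addr0.
Qed.

Lemma repr_add (K : fieldType) (F G : (nat -> K) -> K) :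
  krepr F -> krepr G -> krepr (fun z => F z + G z).
Proof.
move=> [p hp] [q hq]; exists (p ++ q) => z.
by rewrite /keval big_cat -/(keval p z) -/(keval q z) hp hq.
Qed.

Definition mon (K : fieldType) (s : seq nat) (z : nat -> K) :=
  \prod_(j < size s) z j ^+ nth 0%N s j.

Lemma mon_widen (K : fieldType) (s : seq nat) (z : nat -> K) N :
  (size s <= N)%N -> mon s z = \prod_(j < N) z j ^+ nth 0%N s j.
Proof.
move=> hN; rewrite /mon (big_ord_widen N (fun j => z j ^+ nth 0%N s j) hN).
rewrite big_mkcond; apply: eq_bigr => i _; case: ifP => // /negbT.
by rewrite -leqNgt => h; rewrite nth_default // expr0.
Qed.

Definition addl (s t : seq nat) :=
  mkseq (fun j => nth 0%N s j + nth 0%N t j)%N (maxn (size s) (size t)).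

Lemma mon_addl (K : fieldType) s t (z : nat -> K) :
  mon (addl s t) z = mon s z * mon t z.
Proof.
rewrite (mon_widen (s:=s) z (leq_maxl (size s) (size t))).
rewrite (mon_widen (s:=t) z (leq_maxr (size s) (size t))) /mon size_mkseq -big_split /=.
by apply: eq_bigr => i _; rewrite nth_mkseq // exprD.
Qed.

Lemma repr_mul (K : fieldType) (F G : (nat -> K) -> K) :
  krepr F -> krepr G -> krepr (fun z => F z * G z).
Proof.
move=> [p hp] [q hq].
exists [seq (a.1 * b.1, addl a.2 b.2) | a <- p, b <- q] => z.
rewrite -hp -hq /keval.
rewrite (big_allpairs_dep (op := +%R) (h := fun a b => (a.1 * b.1, addl a.2 b.2))).
rewrite mulr_suml; apply: eq_bigr => a _; rewrite mulr_sumr; apply: eq_bigr => b _ /=.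
have := mon_addl a.2 b.2 z; rewrite /mon => ->.
by rewrite mulrACA.
Qed.

Lemma repr_var (K : fieldType) (j : nat) : krepr (fun z : nat -> K => z j).
Proof.
exists [:: (1, rcons (nseq j 0%N) 1%N)] => z.
rewrite /keval big_cons big_nil /= mul1r addr0 size_rcons size_nseq big_ord_recr /=.
rewrite nth_rcons size_nseq ltnn eqxx expr1 big1 ?mul1r // => i _.
by rewrite nth_rcons size_nseq ltn_ord nth_nseq ltn_ord expr0.
Qed.

Lemma repr_big (K : fieldType) (I : Type) (r : seq I) (P : pred I)
  (op : K -> K -> K) (idx : K) (F : (nat -> K) -> I -> K) :
  krepr (fun _ => idx) ->
  (forall A B, krepr A -> krepr B -> krepr (fun z => op (A z) (B z))) ->
  (forall i, krepr (fun z => F z i)) ->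
  krepr (fun z => \big[op/idx]_(i <- r | P i) F z i).
Proof.
move=> h0 hop hF; elim: r => [|a r IH].
  by apply: repr_ext h0 => z; rewrite big_nil.
case hP: (P a).
  by apply: repr_ext (hop _ _ (hF a) IH) => z; rewrite big_cons hP.
by apply: repr_ext IH => z; rewrite big_cons hP.
Qed.

Definition reprps (K : fieldType) n (A : (nat -> K) -> ps K n) :=
  forall b, krepr (fun z => A z b).

Lemma reprps_ext (K : fieldType) n (A B : (nat -> K) -> ps K n) :
  (forall z b, A z b = B z b) -> reprps A -> reprps B.
Proof. by move=> e h b; apply: repr_ext (h b) => z; rewrite e. Qed.

Lemma reprps_cst (K : fieldType) n (g : ps K n) : reprps (fun _ => g).
Proof. by move=> b; apply: repr_cst. Qed.

Lemma reprps_add (K : fieldType) n (A B : (nat -> K) -> ps K n) :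
  reprps A -> reprps B -> reprps (fun z => ps_add (A z) (B z)).
Proof. by move=> hA hB b; apply: repr_add. Qed.

Lemma reprps_mul (K : fieldType) n (A B : (nat -> K) -> ps K n) :
  reprps A -> reprps B -> reprps (fun z => ps_mul (A z) (B z)).
Proof.
move=> hA hB b; rewrite /ps_mul; apply: repr_big.
- exact: repr_cst.
- exact: repr_add.
- by move=> al; apply: repr_mul.
Qed.

Lemma reprps_pow (K : fieldType) n (A : (nat -> K) -> ps K n) k :
  reprps A -> reprps (fun z => ps_pow (A z) k).
Proof.
move=> hA; elim: k => [|k IH]; first exact: reprps_cst.
by apply: reprps_ext (reprps_mul hA IH) => z b.
Qed.

Lemma reprps_big (K : fieldType) n (I : Type) (r : seq I) (P : pred I)
  (op : ps K n -> ps K n -> ps K n) (idx : ps K n) (F : (nat -> K) -> I -> ps K n) :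
  (forall A B, reprps A -> reprps B -> reprps (fun z => op (A z) (B z))) ->
  (forall i, reprps (fun z => F z i)) ->
  reprps (fun z => \big[op/idx]_(i <- r | P i) F z i).
Proof.
move=> hop hF; elim: r => [|a r IH].
  by apply: reprps_ext (reprps_cst idx) => z b; rewrite big_nil.
case hP: (P a).
  by apply: reprps_ext (hop _ _ (hF a) IH) => z b; rewrite big_cons hP.
by apply: reprps_ext IH => z b; rewrite big_cons hP.
Qed.

Lemma reprps_eval (K : fieldType) n m (p : pspoly K n m) (Y : (nat -> K) -> 'I_m -> ps K n) :
  (forall i, reprps (fun z => Y z i)) -> reprps (fun z => pseval p (Y z)).
Proof.
move=> hY; rewrite /pseval; apply: reprps_big; first exact: reprps_add.
move=> t; apply: reprps_mul; first exact: reprps_cst.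
apply: reprps_big; first exact: reprps_mul.
by move=> i; apply: reprps_pow.
Qed.

Definition Vt n m := (('I_m * mono n) + ('I_m * mono n))%type.
Definition yz (K : fieldType) n m (z : nat -> K) : 'I_m -> ps K n :=
  fun i b => z (pickle (inl (i, b) : Vt n m)).
Definition wz (K : fieldType) n m (z : nat -> K) : 'I_m -> ps K n :=
  fun i b => z (pickle (inr (i, b) : Vt n m)).
Definition conv n c (al : {ffun 'I_n -> 'I_c.+1}) : mono n := [ffun j => nat_of_ord (al j)].
Definition bad n m (J : 'I_m -> {set 'I_n}) i (b : mono n) :=
  [exists j, (j \notin J i) && (b j != 0%N)].
Definition Et n m r := ((('I_m * mono n) + ('I_r * mono n)) + 'I_m)%type.

Definition eqf (K : fieldType) n m r (f : 'I_r -> pspoly K n m) (J : 'I_m -> {set 'I_n})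
  (c : mono m) (e : Et n m r) : (nat -> K) -> K :=
  match e with
  | inl (inl (i, b)) => fun z => if bad J i b || (mdeg b < c i)%N then yz z i b else 0
  | inl (inr (k, b)) => fun z => pseval (f k) (yz z) b
  | inr i => fun z => \sum_(al : {ffun 'I_n -> 'I_(c i).+1} | mdeg (conv al) == c i)
                         yz z i (conv al) * wz z i (conv al) - 1
  end.

Lemma eqf_repr (K : fieldType) n m r f J c e : krepr (@eqf K n m r f J c e).
Proof.
case: e => [[ib|kb]|i] /=; [case: ib => i b | case: kb => k b |] => /=.
- case: (bad J i b || _); [exact: repr_var | exact: repr_cst].
- by apply: reprps_eval => i b'; apply: repr_var.
- apply: repr_add; last exact: repr_cst.
  apply: repr_big; [exact: repr_cst | exact: repr_add |] => al.
  by apply: repr_mul; apply: repr_var.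
Qed.

Definition Ssys (K : fieldType) n m r f J c (j : nat) : kpoly K :=
  match (unpickle j : option (Et n m r)) with
  | Some e => proj1_sig (constructive_indefinite_description _ (@eqf_repr K n m r f J c e))
  | None => [::]
  end.

Lemma Ssys_spec (K : fieldType) n m r f J c j e z :
  (unpickle j : option (Et n m r)) = Some e -> keval (@Ssys K n m r f J c j) z = eqf f J c e z.
Proof.
rewrite /Ssys => ->.
by case: (constructive_indefinite_description _ _) => p hp /=.
Qed.

Lemma Ssys_none (K : fieldType) n m r f J c j z :
  (unpickle j : option (Et n m r)) = None -> keval (@Ssys K n m r f J c j) z = 0.
Proof. by rewrite /Ssys => ->; rewrite /keval big_nil. Qed.

Lemma Ssys_pickle (K : fieldType) n m r f J c (e : Et n m r) z :
  keval (@Ssys K n m r f J c (pickle e)) z = eqf f J c e z.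
Proof. by apply: Ssys_spec; rewrite pickleK. Qed.

Lemma conv_inj n c : injective (@conv n c).
Proof.
move=> a1 a2 h; apply/ffunP => j; apply: val_inj.
by have := congr1 (fun g : mono n => g j) h; rewrite !ffunE.
Qed.

Lemma leq_mdeg n (b : mono n) j : (b j <= mdeg b)%N.
Proof. by rewrite /mdeg (bigD1 j) //= leq_addr. Qed.

Definition degof n m r (j : nat) : nat :=
  match (unpickle j : option (Et n m r)) with
  | Some (inl (inr (k, b))) => mdeg b
  | _ => 0%N
  end.

Lemma key (K : fieldType) (hK : aleph0_complete K)
  (n m r : nat) (f : 'I_r -> pspoly K n m) (J : 'I_m -> {set 'I_n}) (c : mono m) :
  (forall N, exists y' : 'I_m -> ps K n,
      (forall i, in_subring (J i) (y' i)) /\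
      (forall k, in_pow_max_ideal (pseval (f k) y') N) /\
      (forall i, ps_ord_eq (y' i) (c i))) ->
  exists y : 'I_m -> ps K n,
        (forall i, in_subring (J i) (y i)) /\
        (forall k, ps_is0 (pseval (f k) y)) /\
        (forall i, ps_ord_eq (y i) (c i)).
Proof.
move=> happ.
have [z hz] : exists z : nat -> K, forall j, keval (Ssys f J c j) z = 0.
  apply/(hK (Ssys f J c)) => F.
  have [y' [hJ [hN ho]]] := happ (\max_(j <- F) degof n m r j).+1%N.
  pose b0 i := proj1_sig (constructive_indefinite_description _ (proj1 (ho i))).
  have hb0 i : mdeg (b0 i) = c i /\ y' i (b0 i) != 0.
    by rewrite /b0; case: (constructive_indefinite_description _ _).
  pose z (j : nat) : K := match (unpickle j : option (Vt n m)) with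
    | Some (inl (i, b)) => y' i b
    | Some (inr (i, b)) => if b == b0 i then (y' i b)^-1 else 0
    | None => 0 end.
  have yzE : yz z = y'.
    apply: functional_extensionality => i; apply: functional_extensionality => b.
    by rewrite /yz /z pickleK.
  have wzE i b : wz z i b = if b == b0 i then (y' i b)^-1 else 0.
    by rewrite /wz /z pickleK.
  exists z => j jF.
  case hu: (unpickle j : option (Et n m r)) => [e|]; last exact: Ssys_none.
  rewrite (Ssys_spec _ _ _ _ hu).
  case: e hu => [[ib|kb]|i] hu /=.
  - case: ib hu => i b hu /=.
    case hb: (bad J i b); rewrite /= ?yzE.
      by apply: hJ; apply/existsP: hb.
    case: ifP => // hlt; exact: (proj2 (ho i)).
  - case: kb hu => k b hu /=; rewrite yzE; apply: hN.
    have : (degof n m r j <= \max_(j <- F) degof n m r j)%N by apply: leq_bigmax_seq.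
    by rewrite /degof hu.
  - pose al0 : {ffun 'I_n -> 'I_(c i).+1} := [ffun j => inord (b0 i j)].
    have hal0 : conv al0 = b0 i.
      apply/ffunP => j'; rewrite !ffunE inordK // ltnS -(proj1 (hb0 i)).
      exact: leq_mdeg.
    rewrite (bigD1 al0) /=; last by rewrite hal0 (proj1 (hb0 i)).
    rewrite big1; last first.
      move=> al /andP[_ hne]; rewrite wzE.
      have -> : (conv al == b0 i) = false.
        by apply/negbTE; rewrite -hal0; apply: contra hne => /eqP /conv_inj ->.
      by rewrite mulr0.
    by rewrite addr0 hal0 wzE eqxx yzE mulfV ?subrr //; case: (hb0 i).
have hzE (e : Et n m r) : eqf f J c e z = 0 by rewrite -Ssys_pickle hz.
exists (yz z); split; [|split].
- move=> i b /existsP hb; have := hzE (inl (inl (i, b))); rewrite /=.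
  by have -> : bad J i b by [].
- by move=> k b; have := hzE (inl (inr (k, b))).
- move=> i; split; last first.
    move=> b hb; have := hzE (inl (inl (i, b))); rewrite /= hb orbT; exact.
  have := hzE (inr i); rewrite /=.
  case: (boolP [exists al : {ffun 'I_n -> 'I_(c i).+1},
                   (mdeg (conv al) == c i) && (yz z i (conv al) != 0)]).
    by case/existsP => al /andP[/eqP h1 h2] _; exists (conv al).
  rewrite negb_exists => /forallP hall.
  rewrite big1 ?sub0r => [/eqP|al hal]; first by rewrite oppr_eq0 oner_eq0.
  have := hall al; rewrite hal /= negbK => /eqP ->; exact: mul0r.
Qed.

Theorem corollary3p7 (K : fieldType) (hK : aleph0_complete K)
  (n m r : nat) (f : 'I_r -> pspoly K n m) (J : 'I_m -> {set 'I_n}) :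
  exists nu : mono m -> nat,
    forall (c : mono m) (y' : 'I_m -> ps K n),
      (forall i, in_subring (J i) (y' i)) ->
      (forall k, in_pow_max_ideal (pseval (f k) y') (nu c)) ->
      (forall i, ps_ord_eq (y' i) (c i)) ->
      exists y : 'I_m -> ps K n,
        (forall i, in_subring (J i) (y i)) /\
        (forall k, ps_is0 (pseval (f k) y)) /\
        (forall i, ps_ord_eq (y i) (c i)).
Proof.
have H (c : mono m) : exists N : nat, forall y' : 'I_m -> ps K n,
      (forall i, in_subring (J i) (y' i)) ->
      (forall k, in_pow_max_ideal (pseval (f k) y') N) ->
      (forall i, ps_ord_eq (y' i) (c i)) ->
      exists y : 'I_m -> ps K n,
        (forall i, in_subring (J i) (y i)) /\
        (forall k, ps_is0 (pseval (f k) y)) /\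
        (forall i, ps_ord_eq (y i) (c i)).
  case: (classic (exists N : nat, forall y' : 'I_m -> ps K n,
      (forall i, in_subring (J i) (y' i)) ->
      (forall k, in_pow_max_ideal (pseval (f k) y') N) ->
      (forall i, ps_ord_eq (y' i) (c i)) ->
      exists y : 'I_m -> ps K n,
        (forall i, in_subring (J i) (y i)) /\
        (forall k, ps_is0 (pseval (f k) y)) /\
        (forall i, ps_ord_eq (y i) (c i)))) => // hno.
  have E : exists y : 'I_m -> ps K n,
        (forall i, in_subring (J i) (y i)) /\
        (forall k, ps_is0 (pseval (f k) y)) /\
        (forall i, ps_ord_eq (y i) (c i)).
    apply: (key hK) => N; apply: NNPP => hn; apply: hno; exists N => y' h1 h2 h3.
    by exfalso; apply: hn; exists y'.
  by exists 0%N => *.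
exists (fun c => proj1_sig (constructive_indefinite_description _ (H c))) => c.
by case: (constructive_indefinite_description _ _).
Qed.
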